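(* Let $\mathbf A\in\mathbb H^{m\times n}$ and $t\in\mathbb R$. Then for all $i=1,\dots,n$ and $j=1,\dots,m$, \[ \operatorname{cdet}_i\big((t\mathbf I+\mathbf A^{*}\mathbf A)_{.i}(\mathbf a^{*}_{.j})\big)=c_1^{(ij)}t^{n-1}+c_2^{(ij)}t^{n-2}+\dots+c_n^{(ij)}, \] where $c_n^{(ij)}=\operatorname{cdet}_i\big((\mathbf A^{*}\mathbf A)_{.i}(\mathbf a^{*}_{.j})\big)$ and $c_k^{(ij)}=\sum_{\beta\in J_{k,n}\{i\}}\operatorname{cdet}_i\Big(\big((\mathbf A^{*}\mathbf A)_{.i}(\mathbf a^{*}_{.j})\big)^{\beta}_{\beta}\Big)$ for $k=1,\dots,n-1$.
   Context: $\mathbb H$ is the quaternion skew field, $\mathbf A^*$ the conjugate transpose, $\mathbf a^*_{.j}$ the $j$th column of $\mathbf A^*$; $\mathbf M_{.i}(\mathbf b)$ is $\mathbf M$ with its $i$th column replaced by $\mathbf b$. Column determinant of $\mathbf M=(m_{ij})\in\mathbb H^{n\times n}$: $\operatorname{cdet}_j\mathbf M=\sum_{\tau\in S_n}(-1)^{n-r}m_{j_{k_r}j_{k_r+l_r}}\cdots m_{j_{k_r+1}j_{k_r}}\cdots m_{j\,j_{k_1+l_1}}\cdots m_{j_{k_1+1}j_{k_1}}m_{j_{k_1}j}$, where $\tau=(j_{k_r+l_r}\dots j_{k_r+1}j_{k_r})\cdots(j_{k_2+l_2}\dots j_{k_2})(j_{k_1+l_1}\dots j_{k_1+1}j_{k_1}\,j)$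 is the decomposition of $\tau$ into $r$ disjoint cycles (fixed points included), the rightmost cycle ending with $j$, each other cycle ending on the right with its smallest element, and $j_{k_2}<\dots<j_{k_r}$. $L_{k,n}$ is the set of strictly increasing $k$-sequences from $\{1,\dots,n\}$ and $J_{k,n}\{i\}=\{\beta\in L_{k,n}: i\in\beta\}$. $\mathbf N^{\beta}_{\beta}$ is the principal submatrix of $\mathbf N$ with rows and columns indexed by $\beta$; in $\operatorname{cdet}_i(\mathbf N^\beta_\beta)$ the subscript $i$ refers to the column of the submatrix coming from column $i$ of $\mathbf N$. *)

(* Defs.v *)
From HB Require Import structures.
From mathcomp Require Import all_boot all_order all_algebra all_fingroup.
From mathcomp Require Import ring.
From mathcomp Require Export reals.
Set Implicit Arguments. Unset Strict Implicit. Unset Printing Implicit Defensive.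
Import GRing.Theory.
Local Open Scope ring_scope.

(* The quaternion algebra H(R) = R + R i + R j + R k, i^2=j^2=k^2=ijk=-1 *)
Record quat (R : Type) := Quat { q0 : R; q1 : R; q2 : R; q3 : R }.
Arguments Quat {R}.

Section QuatRing.
Variable R : comNzRingType.

Definition quat2tup (q : quat R) := (q0 q, q1 q, q2 q, q3 q).
Definition tup2quat (x : R * R * R * R) := let: (a, b, c, d) := x in Quat a b c d.
Lemma quat2tupK : cancel quat2tup tup2quat. Proof. by case. Qed.

HB.instance Definition _ := Equality.copy (quat R) (can_type quat2tupK).
HB.instance Definition _ := Choice.copy (quat R) (can_type quat2tupK).

Definition quat0 : quat R := Quat 0 0 0 0.
Definition quat1 : quat R := Quat 1 0 0 0.
Definition addq (p q : quat R) :=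
  Quat (q0 p + q0 q) (q1 p + q1 q) (q2 p + q2 q) (q3 p + q3 q).
Definition oppq (p : quat R) := Quat (- q0 p) (- q1 p) (- q2 p) (- q3 p).
Definition mulq (p q : quat R) :=
  Quat (q0 p * q0 q - q1 p * q1 q - q2 p * q2 q - q3 p * q3 q)
       (q0 p * q1 q + q1 p * q0 q + q2 p * q3 q - q3 p * q2 q)
       (q0 p * q2 q - q1 p * q3 q + q2 p * q0 q + q3 p * q1 q)
       (q0 p * q3 q + q1 p * q2 q - q2 p * q1 q + q3 p * q0 q).

Lemma addqA : associative addq.
Proof. by case=> ? ? ? ? [? ? ? ?] [? ? ? ?]; rewrite /addq /= !addrA. Qed.
Lemma addqC : commutative addq.
Proof. by case=> ? ? ? ? [? ? ? ?]; rewrite /addq /=; congr Quat; apply: addrC. Qed.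
Lemma add0q : left_id quat0 addq.
Proof. by case=> ? ? ? ?; rewrite /addq /= !add0r. Qed.
Lemma addNq : left_inverse quat0 oppq addq.
Proof. by case=> ? ? ? ?; rewrite /addq /= !addNr. Qed.

HB.instance Definition _ := GRing.isZmodule.Build (quat R) addqA addqC add0q addNq.

Lemma mulqA : associative mulq.
Proof.
by case=> a b c d [e f g h] [i j k l]; rewrite /mulq /=; congr Quat; ring.
Qed.
Lemma mul1q : left_id quat1 mulq.
Proof. by case=> a b c d; rewrite /mulq /=; congr Quat; ring. Qed.
Lemma mulq1 : right_id quat1 mulq.
Proof. by case=> a b c d; rewrite /mulq /=; congr Quat; ring. Qed.
Lemma mulqDl : left_distributive mulq addq.
Proof.
by case=> a b c d [e f g h] [i j k l]; rewrite /mulq /= /addq /=; congr Quat; ring.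
Qed.
Lemma mulqDr : right_distributive mulq addq.
Proof.
by case=> a b c d [e f g h] [i j k l]; rewrite /mulq /= /addq /=; congr Quat; ring.
Qed.
Lemma quat1_neq0 : quat1 != 0.
Proof. by apply/eqP => -[] /eqP; rewrite oner_eq0. Qed.

HB.instance Definition _ := GRing.Zmodule_isNzRing.Build (quat R)
  mulqA mul1q mulq1 mulqDl mulqDr quat1_neq0.

Definition qreal (r : R) : quat R := Quat r 0 0 0.
Definition qconj (p : quat R) : quat R := Quat (q0 p) (- q1 p) (- q2 p) (- q3 p).

End QuatRing.

Section QuatMatrices.
Variable R : comNzRingType.
Local Notation H := (quat R).

Definition conjtr m n (A : 'M[H]_(m, n)) : 'M[H]_(n, m) := map_mx (@qconj R) A^T.

(* M_{.i}(b): M with its i-th column replaced by b *)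
Definition col_repl m n (M : 'M[H]_(m, n)) (i : 'I_n) (b : 'cV[H]_m) : 'M[H]_(m, n) :=
  \matrix_(a, c) if c == i then b a 0 else M a c.

(* product m_{s tau(s)} m_{tau(s) tau^2(s)} ... m_{tau^{-1}(s) s}
   over the cycle of tau through s, read from s *)
Definition cycle_prod n (M : 'M[H]_n) (tau : 'S_n) (s : 'I_n) : H :=
  \prod_(k < #|porbit tau s|) M ((tau ^+ k)%g s) ((tau ^+ k.+1)%g s).

(* leading elements of the cycles of tau in the order used by cdet_j:
   the minima of the cycles not containing j, in decreasing order,
   followed by j itself *)
Definition cdet_heads n (tau : 'S_n) (j : 'I_n) : seq 'I_n :=
  rcons [seq s <- rev (enum 'I_n) |
          (s \notin porbit tau j) && [forall x in porbit tau s, (s <= x)%N]] j.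

Definition cdet n (j : 'I_n) (M : 'M[H]_n) : H :=
  \sum_(tau : 'S_n)
    (-1) ^+ (n - #|porbits tau|) *
    \prod_(s <- cdet_heads tau j) cycle_prod M tau s.

(* principal submatrix N^beta_beta for beta : 'I_k -> 'I_n (increasing) *)
Definition princ_sub n k (N : 'M[H]_n) (beta : 'I_k -> 'I_n) : 'M[H]_k :=
  \matrix_(a, b) N (beta a) (beta b).

Definition strictly_incr n k (beta : {ffun 'I_k -> 'I_n}) : bool :=
  [forall a : 'I_k, forall b : 'I_k, (a < b)%N ==> (beta a < beta b)%N].

(* sum_{beta in J_{k,n}{i}} cdet_i (N^beta_beta) ; beta ranges over strictly
   increasing k-sequences, and a over the (unique, if any) position with
   beta a = i, i.e. the column of the submatrix coming from column i *)
Definition sum_principal_cdet n k (N : 'M[H]_n) (i : 'I_n) : H :=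
  \sum_(beta : {ffun 'I_k -> 'I_n} | strictly_incr beta)
    \sum_(a : 'I_k | beta a == i) cdet a (princ_sub N beta).

End QuatMatrices.

(* Main.v *)
Require Import Defs.
From mathcomp Require Import all_boot all_order all_algebra all_fingroup.
From mathcomp Require Import reals.
From mathcomp Require Import zify ring.
Import GRing.Theory.
Local Open Scope ring_scope.
Set Implicit Arguments. Unset Strict Implicit. Unset Printing Implicit Defensive.

Lemma expand_prod (T : finType) (V : nzRingType) (c : V) (x : T -> V)
    (s : seq T) (P : {set T}) :
  (forall y, GRing.comm c y) -> uniq s -> {subset P <= s} ->
  \prod_(h <- s) (x h + (h \in P)%:R * c) =
  \sum_(F : {set T} | F \subset P) c ^+ #|F| * \prod_(h <- s | h \notin F) x h.
Proof.
move=> cC.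
have cX : forall k y, y * c ^+ k = c ^+ k * y by move=> k y; apply: commrX; exact/esym/cC.
elim: s P => [|h s IH] P /= us sP.
  have P0 : P = set0 by apply/setP=> y; rewrite inE; apply/negP=> /sP.
  rewrite big_nil (big_pred1 set0) ?cards0 ?big_nil ?mulr1 // => F.
  by rewrite P0 subset0.
case/andP: us => hs us.
rewrite big_cons.
case hP: (h \in P).
- pose P' := P :\ h.
  have sP' : {subset P' <= s}.
    move=> y; rewrite !inE => /andP[yh /sP]; rewrite inE (negbTE yh) //.
  have -> : \prod_(j <- s) (x j + (j \in P)%:R * c) =
            \prod_(j <- s) (x j + (j \in P')%:R * c).
    apply: eq_big_seq => y ys; rewrite !inE; case: (y =P h) => // yh.
    by move: ys; rewrite yh (negbTE hs).
  rewrite IH // mul1r mulrDl [RHS](bigID (fun F : {set T} => h \in F)) /= addrC.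
  congr (_ + _).
  + rewrite mulr_sumr; apply: eq_big => F.
      rewrite /P'; apply/idP/andP => [FP'|[FP hF]].
        split; first by apply: subset_trans FP' (subsetDl _ _).
        by apply: contraTN FP' => hF; apply/subsetPn; exists h; rewrite ?inE ?eqxx.
      by apply/subsetP=> y yF; rewrite !inE (subsetP FP) ?andbT //; apply: contraNneq hF => <-.
    move=> FP'.
    have hF : h \notin F by apply: contraTN FP' => hF; apply/subsetPn; exists h; rewrite ?inE ?eqxx.
    by rewrite big_cons hF mulrA cX -mulrA.
  + rewrite [RHS](reindex_onto (fun G => h |: G) (fun F => F :\ h)); last first.
      by move=> F /andP[_ hF]; rewrite setD1K.
    rewrite mulr_sumr; apply: eq_big => G.
      rewrite setU11 andbT; apply/idP/andP => [GP'|[hGP /eqP hG]]; last first.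
        by rewrite -hG; apply: setSD.
      have hG : h \notin G by apply/negP => /(subsetP GP'); rewrite !inE eqxx.
      split; first by rewrite subUset sub1set hP (subset_trans GP' (subsetDl _ _)).
      by apply/eqP; rewrite setU1K.
    rewrite {1}/P' => GP'.
    have hG : h \notin G by apply/negP => /(subsetP GP'); rewrite !inE eqxx.
    rewrite cardsU1 hG big_cons setU11 /= exprS mulrA; congr (_ * _).
    rewrite -[LHS]big_filter -[RHS]big_filter; congr bigop.
    apply: eq_in_filter => y ys; rewrite !inE negb_or.
    by case: (y =P h) => //= yh; move: ys; rewrite yh (negbTE hs).
- have sP1 : {subset P <= s}.
    by move=> y yP; have := sP y yP; rewrite inE; case: (y =P h) => // yh; rewrite -yh yP in hP.
  rewrite mul0r addr0 IH // mulr_sumr; apply: eq_bigr => F FP.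
  have hF : h \notin F by apply/negP => /(subsetP FP); rewrite hP.
  by rewrite big_cons hF mulrA cX -mulrA.
Qed.

Lemma permX_fix (T : finType) (s : {perm T}) x k : s x = x -> (s ^+ k)%g x = x.
Proof. by move=> sx; elim: k => [|k IH]; rewrite ?expg0 ?perm1 // expgSr permM IH. Qed.

Lemma fixed_porbit (T : finType) (s : {perm T}) x : s x = x -> porbit s x = [set x].
Proof.
move=> sx; apply/setP => y; rewrite inE; apply/porbitP/eqP => [[k ->]|->].
  exact: permX_fix.
by exists 0; rewrite expg0 perm1.
Qed.

Lemma cycle_prod_fix (R : comNzRingType) n (M : 'M[quat R]_n) (s : 'S_n) h :
  s h = h -> cycle_prod M s h = M h h.
Proof.
move=> sh; rewrite /cycle_prod fixed_porbit // cards1 big_ord1.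
by rewrite expg0 expg1 perm1 sh.
Qed.

Lemma cycle_prod_nofix (R : comNzRingType) n (M1 M2 : 'M[quat R]_n) (s : 'S_n) h :
  s h != h -> (forall x y, x != y -> M1 x y = M2 x y) ->
  cycle_prod M1 s h = cycle_prod M2 s h.
Proof.
move=> sh eM; apply: eq_bigr => k _; apply: eM.
by rewrite expgS permM (inj_eq (@perm_inj _ _)) eq_sym.
Qed.

Lemma cyc_expand (R : comNzRingType) n (P : 'M[quat R]_n) (i : 'I_n) b t
    (s : 'S_n) h :
  cycle_prod (col_repl ((qreal t)%:M + P) i b) s h =
  cycle_prod (col_repl P i b) s h +
    (h \in [set x | (s x == x) && (x != i)])%:R * qreal t.
Proof.
rewrite inE; case: (s h =P h) => sh /=.
  rewrite !cycle_prod_fix // !mxE eqxx /=.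
  case: (h =P i) => _ /=; first by rewrite mul0r addr0.
  by rewrite mul1r addrC.
rewrite mul0r addr0; apply: cycle_prod_nofix; first exact/eqP.
move=> x y xy; rewrite !mxE; case: (y == i) => //.
by rewrite (negbTE xy) mulr0n add0r.
Qed.

Definition lift_fun n k (b : 'I_k -> 'I_n) (s : 'S_k) (x : 'I_n) : 'I_n :=
  if [pick a | b a == x] is Some a then b (s a) else x.

Lemma pick_beta n k (b : 'I_k -> 'I_n) a : injective b -> [pick a' | b a' == b a] = Some a.
Proof.
move=> ib; case: pickP => [a' /eqP /ib -> // | /(_ a)]; by rewrite eqxx.
Qed.

Lemma pick_none n k (b : 'I_k -> 'I_n) x : x \notin codom b -> [pick a | b a == x] = None.
Proof.
move=> xb; case: pickP => // a /eqP ea; by rewrite -ea codom_f in xb.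
Qed.

Lemma lift_fun_inj n k (b : 'I_k -> 'I_n) (ib : injective b) s : injective (lift_fun b s).
Proof.
move=> x y; rewrite /lift_fun.
case: (boolP (x \in codom b)) => [/codomP[a ->]|xb]; case: (boolP (y \in codom b)) => [/codomP[a' ->]|yb].
- by rewrite !pick_beta // => /ib /perm_inj ->.
- by rewrite pick_beta // (pick_none yb) => ey; rewrite -ey codom_f in yb.
- by rewrite pick_beta // (pick_none xb) => ey; rewrite ey codom_f in xb.
- by rewrite (pick_none xb) (pick_none yb).
Qed.

Definition liftp n k (b : 'I_k -> 'I_n) (ib : injective b) (s : 'S_k) : 'S_n :=
  perm (@lift_fun_inj n k b ib s).

Lemma liftpE n k (b : 'I_k -> 'I_n) (ib : injective b) s a : liftp ib s (b a) = b (s a).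
Proof. by rewrite permE /lift_fun pick_beta. Qed.

Lemma liftpE_out n k (b : 'I_k -> 'I_n) (ib : injective b) s x :
  x \notin codom b -> liftp ib s x = x.
Proof. by move=> xb; rewrite permE /lift_fun pick_none. Qed.

Lemma liftpX n k (b : 'I_k -> 'I_n) (ib : injective b) s a m :
  (liftp ib s ^+ m)%g (b a) = b ((s ^+ m)%g a).
Proof.
elim: m => [|m IH]; first by rewrite !expg0 !perm1.
by rewrite !expgSr !permM IH liftpE.
Qed.

Lemma porbit_lift n k (b : 'I_k -> 'I_n) (ib : injective b) s a :
  porbit (liftp ib s) (b a) = b @: porbit s a.
Proof.
apply/setP => y; apply/porbitP/imsetP => [[m ->]|[z /porbitP[m ->] ->]].
  by exists ((s ^+ m)%g a); rewrite ?mem_porbit // liftpX.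
by exists m; rewrite liftpX.
Qed.

Lemma porbit_lift_out n k (b : 'I_k -> 'I_n) (ib : injective b) s x :
  x \notin codom b -> porbit (liftp ib s) x = [set x].
Proof. by move=> xb; apply: fixed_porbit; rewrite liftpE_out. Qed.

Lemma card_porbits_lift n k (b : 'I_k -> 'I_n) (ib : injective b) s :
  #|porbits (liftp ib s)| = (#|porbits s| + (n - k))%N.
Proof.
set t := liftp ib s.
pose Bs := [set x | x \in codom b].
have cB : #|Bs| = k by rewrite cardsE card_codom // card_ord.
have Bsb : Bs = b @: [set: 'I_k].
  by apply/setP => x; rewrite inE; apply/codomP/imsetP => [[a ->]|[a _ ->]]; exists a.
have e1 : [set porbit t x | x in Bs] = (fun S : {set 'I_k} => b @: S) @: porbits s.
  rewrite Bsb -imset_comp /porbits -imset_comp.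
  apply/setP => A; apply/imsetP/imsetP => -[a _ ->]; exists a; rewrite ?inE //.
    exact: porbit_lift.
  exact/esym/porbit_lift.
have e2 : [set porbit t x | x in ~: Bs] = [set [set x] | x in ~: Bs].
  by apply: eq_in_imset => x; rewrite !inE => xb; apply: porbit_lift_out.
have -> : porbits t = [set porbit t x | x in Bs] :|: [set porbit t x | x in ~: Bs].
  rewrite -imsetU setUCr; apply/setP => A; apply/imsetP/imsetP => -[x _ ->]; by exists x.
rewrite cardsU e1 e2.
rewrite card_imset; last exact: (imset_inj ib).
have -> : #|[set [set x] | x in ~: Bs]| = #|~: Bs|.
  by apply: card_imset => x y /setP /(_ x); rewrite !inE eqxx => /esym/eqP.
have -> : [set b @: S | S : {set _} in porbits s] :&: [set [set x] | x in ~: Bs] = set0.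
  apply/setP => A; rewrite !inE; apply/andP => -[/imsetP[S _ ->] /imsetP[x]].
  rewrite inE => xB eS.
  have : x \in [set b y | y in S] by rewrite eS set11.
  by case/imsetP => y _ exy; rewrite exy inE codom_f in xB.
rewrite cards0 subn0; congr (_ + _)%N.
have := cardsC Bs; rewrite cB card_ord => e.
by rewrite -[in RHS]e addKn.
Qed.

Lemma incr_inj n k (b : 'I_k -> 'I_n) :
  (forall a a' : 'I_k, (a < a')%N -> (b a < b a')%N) -> injective b.
Proof.
move=> hinc x y exy; apply/val_inj/eqP; case: (ltngtP x y) => // h.
  by have := hinc _ _ h; rewrite exy ltnn.
by have := hinc _ _ h; rewrite exy ltnn.
Qed.

Lemma incr_le n k (b : 'I_k -> 'I_n) :
  (forall a a' : 'I_k, (a < a')%N -> (b a < b a')%N) ->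
  forall a a', (b a <= b a')%N = (a <= a')%N.
Proof.
move=> hinc a a'; case: (ltngtP a a') => h.
- exact: ltnW (hinc _ _ h).
- by apply/negbTE; rewrite -ltnNge hinc.
- by rewrite (ord_inj h) leqnn.
Qed.

Lemma enum_codom n k (b : 'I_k -> 'I_n) :
  (forall a a' : 'I_k, (a < a')%N -> (b a < b a')%N) ->
  [seq x <- enum 'I_n | x \in codom b] = map b (enum 'I_k).
Proof.
move=> hinc.
have srt : forall m, sorted (relpre (@nat_of_ord m) ltn) (enum 'I_m).
  by move=> m; rewrite -sorted_map val_enum_ord iota_ltn_sorted.
apply: (@irr_sorted_eq _ (relpre (@nat_of_ord n) ltn)).
- by move=> y x z; apply: ltn_trans.
- by move=> x; rewrite /= ltnn.
- by apply: sorted_filter (srt n); move=> y x z; apply: ltn_trans.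
- rewrite sorted_map; apply: sub_sorted (srt k) => x y /=; exact: hinc.
- by move=> x; rewrite mem_filter mem_enum andbT codomE.
Qed.

Lemma heads_lift n k (b : 'I_k -> 'I_n) (hinc : forall a a' : 'I_k, (a < a')%N -> (b a < b a')%N)
   s a :
  [seq h <- cdet_heads (liftp (incr_inj hinc) s) (b a) | h \in codom b] = map b (cdet_heads s a).
Proof.
have ib := incr_inj hinc.
rewrite /cdet_heads filter_rcons codom_f map_rcons; congr rcons.
rewrite !filter_rev map_rev; congr rev.
rewrite -filter_predI (eq_filter (a2 := predI (fun x => (x \notin porbit (liftp (incr_inj hinc) s) (b a))
       && [forall x0 in porbit (liftp (incr_inj hinc) s) x, (x <= x0)%N]) (mem (codom b)))); last first.
  by move=> x /=; rewrite andbC.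
rewrite filter_predI enum_codom // filter_map; congr map.
apply: eq_filter => y /=.
rewrite !porbit_lift (mem_imset _ _ ib); congr andb.
apply/forallP/forallP => H x; apply/implyP => xS.
  by have := implyP (H (b x)); rewrite (mem_imset _ _ ib) (incr_le hinc) => ->.
move: xS => /imsetP[z zS ->]; rewrite (incr_le hinc).
exact: (implyP (H z)).
Qed.

Lemma cycle_lift (R : comNzRingType) n k (b : 'I_k -> 'I_n) (ib : injective b) (M : 'M[quat R]_n) s y :
  cycle_prod M (liftp ib s) (b y) = cycle_prod (princ_sub M b) s y.
Proof.
rewrite /cycle_prod porbit_lift card_imset //; apply: eq_bigr => m _.
by rewrite !liftpX mxE.
Qed.

Lemma liftp_surj n k (b : 'I_k -> 'I_n) (ib : injective b) (t : 'S_n) :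
  [forall x, (x \notin codom b) ==> (t x == x)] -> exists s, t = liftp ib s.
Proof.
move=> /forallP tfix.
have tin : forall a, t (b a) \in codom b.
  move=> a; apply/negPn/negP => nb.
  have := implyP (tfix (t (b a))) nb => /eqP /perm_inj eb.
  by rewrite eb codom_f in nb.
pose f a := odflt a [pick a' | b a' == t (b a)].
have fE : forall a, b (f a) = t (b a).
  move=> a; rewrite /f; case: pickP => [a' /eqP //|].
  by move: (tin a) => /codomP[a' ->] /(_ a'); rewrite eqxx.
have finj : injective f.
  by move=> x y /(congr1 b); rewrite !fE => /perm_inj /ib.
exists (perm finj); apply/permP => x.
case: (boolP (x \in codom b)) => [/codomP[a ->]|xb].
  by rewrite liftpE permE fE.
by rewrite liftpE_out // (eqP (implyP (tfix x) xb)).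
Qed.

Lemma core (R : comNzRingType) n k (b : 'I_k -> 'I_n)
    (hinc : forall a a' : 'I_k, (a < a')%N -> (b a < b a')%N) (a : 'I_k) (M : 'M[quat R]_n) :
  \sum_(t : 'S_n | [forall x, (x \notin codom b) ==> (t x == x)])
     (-1) ^+ (n - #|porbits t|) *
     \prod_(h <- cdet_heads t (b a) | h \in codom b) cycle_prod M t h
  = cdet a (princ_sub M b).
Proof.
pose ib := incr_inj hinc.
rewrite /cdet.
rewrite (eq_bigl (fun t => t \in [set liftp ib s | s in [set: 'S_k]])); last first.
  move=> t; apply/idP/imsetP => [/(liftp_surj ib)[s ->]|[s _ ->]]; first by exists s.
  apply/forallP => x; apply/implyP => xb; rewrite liftpE_out //.
rewrite big_imset /=; last by move=> s1 s2 _ _ e; apply/permP => y; apply: (incr_inj hinc); rewrite -!liftpE e.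
apply: eq_big => [s|s _]; first by rewrite inE.
have kn : (k <= n)%N by have := @leq_card _ _ b (incr_inj hinc); rewrite !card_ord.
have pk : (#|porbits s| <= k)%N by have := leq_imset_card (porbit s) 'I_k; rewrite card_ord.
rewrite card_porbits_lift.
have -> : (n - (#|porbits s| + (n - k)) = k - #|porbits s|)%N.
  by lia.
congr (_ * _).
rewrite -big_filter.
rewrite (heads_lift hinc s a).
by rewrite big_map; apply: eq_bigr => y _; rewrite cycle_lift.
Qed.
Lemma qreal_comm (R : comNzRingType) (t : R) (x : quat R) : qreal t * x = x * qreal t.
Proof. case: x => a b c d; change (Defs.mulq (qreal t) (Quat a b c d) = Defs.mulq (Quat a b c d) (qreal t)); rewrite /Defs.mulq /qreal; congr Quat; cbn [q0 q1 q2 q3]; ring. Qed.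
Lemma qrealM (R : comNzRingType) (s t : R) : qreal (s * t) = qreal s * qreal t.
Proof. change (qreal (s * t) = Defs.mulq (qreal s) (qreal t)); rewrite /Defs.mulq /qreal; congr Quat; cbn [q0 q1 q2 q3]; ring. Qed.
Lemma qrealX (R : comNzRingType) (t : R) m : qreal (t ^+ m) = qreal t ^+ m.
Proof. elim: m => [|m IH]; first by []. by rewrite !exprS qrealM IH. Qed.
Lemma enum_setE n (B : {set 'I_n}) : enum B = [seq x <- enum 'I_n | x \in B].
Proof. by rewrite {1}/enum_mem -enumT; apply: eq_filter. Qed.

Lemma nth_enum_set_incr n k (B : {set 'I_n}) (d : 'I_n) :
  #|B| = k -> forall a a' : 'I_k, (a < a')%N ->
  (nth d (enum B) a < nth d (enum B) a')%N.
Proof.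
move=> cB a a' aa'.
have srt : sorted (relpre (@nat_of_ord n) ltn) (enum B).
  rewrite enum_setE; apply: sorted_filter; first by move=> y x z; apply: ltn_trans.
  by rewrite -sorted_map val_enum_ord iota_ltn_sorted.
have sz : size (enum B) = k by rewrite -cB cardE.
apply: (sorted_ltn_nth _ d srt) => //; first by move=> y x z; apply: ltn_trans.
- by rewrite inE sz.
- by rewrite inE sz.
Qed.

Lemma sum_incr_sets (V : nmodType) n k (g : {set 'I_n} -> V) (d : 'I_n) :
  \sum_(bt : {ffun 'I_k -> 'I_n} | strictly_incr bt) g [set x | x \in codom bt]
  = \sum_(B : {set 'I_n} | #|B| == k) g B.
Proof.
rewrite [RHS](reindex_onto (fun bt : {ffun 'I_k -> 'I_n} => [set x | x \in codom bt])
                 (fun B => [ffun a : 'I_k => nth d (enum B) a])); last first.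
  move=> B /eqP cB; apply/setP => x; rewrite inE.
  have sz : size (enum B) = k by rewrite -cB cardE.
  apply/codomP/idP => [[a ->]|xB].
    by rewrite ffunE -mem_enum mem_nth // sz.
  have ix : (index x (enum B) < k)%N by rewrite -sz index_mem mem_enum.
  by exists (Ordinal ix); rewrite ffunE /= nth_index // mem_enum.
apply: eq_bigl => bt.
apply: esym; apply/andP/idP => [[/eqP cB /eqP e]|inc].
  rewrite -e; apply/forallP => a; apply/forallP => a'; apply/implyP => aa'.
  by rewrite !ffunE; apply: nth_enum_set_incr.
have hinc : forall a a' : 'I_k, (a < a')%N -> (bt a < bt a')%N.
  by move=> a a' aa'; exact: (implyP (forallP (forallP inc a) a')).
split.
  by rewrite cardsE card_codom ?card_ord //; apply: (incr_inj hinc).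
apply/eqP/ffunP => a; rewrite ffunE.
have -> : enum [set x | x \in codom bt] = map bt (enum 'I_k).
  rewrite enum_setE -(enum_codom hinc); apply: eq_filter => x; by rewrite inE.
by rewrite (nth_map a) ?size_enum_ord // nth_ord_enum.
Qed.

Definition Sset (R : comNzRingType) n (N : 'M[quat R]_n) (i : 'I_n) (F : {set 'I_n}) : quat R :=
  \sum_(t : 'S_n | [forall x in F, t x == x])
    (-1) ^+ (n - #|porbits t|) * \prod_(h <- cdet_heads t i | h \notin F) cycle_prod N t h.

Lemma S_core (R : comNzRingType) n k (N : 'M[quat R]_n) (i : 'I_n) (b : 'I_k -> 'I_n)
    (hinc : forall a a' : 'I_k, (a < a')%N -> (b a < b a')%N) (a : 'I_k) :
  b a = i -> Sset N i (~: [set x | x \in codom b]) = cdet a (princ_sub N b).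
Proof.
move=> <-; rewrite -core //; apply: eq_big => [t|t _].
  by apply/forallP/forallP => H x; have := H x; rewrite !inE.
by congr (_ * _); apply: eq_bigl => x; rewrite !inE negbK.
Qed.

Lemma S0 (R : comNzRingType) n (N : 'M[quat R]_n) (i : 'I_n) : Sset N i set0 = cdet i N.
Proof.
apply: eq_big => [t|t _]; first by apply/forallP => x; rewrite inE.
suff -> : forall s : seq 'I_n, \prod_(h <- s | h \notin set0) cycle_prod N t h = \prod_(h <- s) cycle_prod N t h by [].
by move=> s0; apply: eq_bigl => x; rewrite inE.
Qed.

Lemma heads_uniq n (t : 'S_n) i : uniq (cdet_heads t i).
Proof.
rewrite /cdet_heads rcons_uniq mem_filter porbit_id /=.
by rewrite filter_uniq // rev_uniq enum_uniq.
Qed.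

Lemma fix_in_heads n (t : 'S_n) i x : t x = x -> x != i -> x \in cdet_heads t i.
Proof.
move=> tx xi; rewrite /cdet_heads mem_rcons in_cons (negbTE xi) /= mem_filter mem_rev mem_enum andbT.
apply/andP; split.
  apply/negP; rewrite porbit_sym fixed_porbit // inE => /eqP ix.
  by rewrite ix eqxx in xi.
by rewrite fixed_porbit //; apply/forallP => y; apply/implyP; rewrite inE => /eqP ->.
Qed.

Lemma lhs_expand (R : comNzRingType) n (P : 'M[quat R]_n) (i : 'I_n) bv (t : R) :
  cdet i (col_repl ((qreal t)%:M + P) i bv) =
  \sum_(F : {set 'I_n} | i \notin F) qreal t ^+ #|F| * Sset (col_repl P i bv) i F.
Proof.
have cC : forall y, GRing.comm (qreal t) y by move=> y; exact: qreal_comm.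
have cX : forall k y, y * qreal t ^+ k = qreal t ^+ k * y.
  by move=> k y; apply: commrX; exact/esym/cC.
rewrite /cdet.
under eq_bigr => s _.
  rewrite (eq_bigr _ (fun h _ => cyc_expand P i bv t s h)).
  rewrite expand_prod //; last first.
  - by move=> x; rewrite inE => /andP[/eqP sx xi]; apply: fix_in_heads.
  - exact: heads_uniq.
  rewrite mulr_sumr.
  under eq_bigr => F _ do rewrite mulrA -(commr_sign (qreal t ^+ #|F|)) -mulrA.
  over.
rewrite (exchange_big_dep (fun F : {set 'I_n} => i \notin F)) /=; last first.
  by move=> s F _ /subsetP FP; apply/negP => /FP; rewrite inE eqxx andbF.
apply: eq_bigr => F iF; rewrite -mulr_sumr; congr (_ * _).
apply: eq_bigl => s; apply/subsetP/forallP => H x.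
  by apply/implyP => /H; rewrite inE => /andP[].
move=> xF; rewrite inE (eqP (implyP (H x) xF)) eqxx /=.
by apply: contraNneq iF => <-.
Qed.

Lemma inner_sum (R : comNzRingType) n k (N : 'M[quat R]_n) (i : 'I_n) (bt : {ffun 'I_k -> 'I_n}) :
  strictly_incr bt ->
  \sum_(a : 'I_k | bt a == i) cdet a (princ_sub N bt) =
  (fun B : {set 'I_n} => if i \in B then Sset N i (~: B) else 0) [set x | x \in codom bt].
Proof.
move=> inc.
have hinc : forall a a' : 'I_k, (a < a')%N -> (bt a < bt a')%N.
  by move=> a a' aa'; exact: (implyP (forallP (forallP inc a) a')).
rewrite /= inE; case: (boolP (i \in codom bt)) => [/codomP[a0 ea0]|ni].
  rewrite (big_pred1 a0) => [|a]; first by symmetry; apply: S_core hinc _ _.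
  by rewrite /= ea0; apply/eqP/eqP => [/(incr_inj hinc)|->].
by apply: big_pred0 => a; apply/negP => /eqP e; rewrite -e codom_f in ni.
Qed.

Lemma rhs_coef (R : comNzRingType) n (N : 'M[quat R]_n) (i : 'I_n) (k : nat) :
  (k < n)%N ->
  (if k.+1 == n then cdet i N else sum_principal_cdet k.+1 N i) =
  \sum_(F : {set 'I_n} | (i \notin F) && (#|F| == n - k.+1)%N) Sset N i F.
Proof.
move=> kn; case: eqP => [e|ne].
  rewrite (big_pred1 set0) ?S0 // => F.
  by rewrite /= e subnn cards_eq0; case: eqP => [->|]; rewrite ?inE ?andbF.
rewrite /sum_principal_cdet.
rewrite (eq_bigr _ (fun bt inc => inner_sum N i inc)).
rewrite (@sum_incr_sets _ _ k.+1 (fun B => if i \in B then Sset N i (~: B) else 0) i) -big_mkcondr.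
rewrite (reindex_inj (@setC_inj _)) /=.
apply: eq_big => [F|F _]; last by rewrite setCK.
have := cardsC F; rewrite card_ord inE andbC => cF.
congr andb; move: cF; set x := #|~: F|; set y := #|F| => cF; apply/eqP/eqP; lia.
Qed.

Lemma main_gen (R : comNzRingType) n (P : 'M[quat R]_n) (i : 'I_n) bv (t : R) :
  cdet i (col_repl ((qreal t)%:M + P) i bv) =
  \sum_(k < n) (if k.+1 == n then cdet i (col_repl P i bv)
                else sum_principal_cdet k.+1 (col_repl P i bv) i) * qreal (t ^+ (n - k.+1)).
Proof.
have cX : forall k y, y * qreal t ^+ k = qreal t ^+ k * y.
  by move=> k y; apply: commrX; exact/esym/qreal_comm.
rewrite lhs_expand.
under [RHS]eq_bigr => k _ do rewrite rhs_coef // qrealX mulr_suml.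
rewrite (exchange_big_dep (fun F : {set 'I_n} => i \notin F)) /=; last by move=> k F _ /andP[].
apply: eq_bigr => F iF.
have Fn : (#|F| < n)%N.
  have := @proper_card _ F [set: 'I_n]; rewrite cardsT card_ord; apply.
  by rewrite properT; apply: contraNneq iF => ->; rewrite inE.
have k0n : (n - #|F|.+1 < n)%N by lia.
rewrite (big_pred1 (Ordinal k0n)) /=; last first.
  move=> k; rewrite /= iF /=; apply/eqP/eqP => [e|->]; last first.
    by change (#|F| = n - (n - #|F|.+1).+1)%N; lia.
  by apply/val_inj => /=; have := ltn_ord k; lia.
rewrite cX; congr (_ * _); congr (_ ^+ _).
by rewrite subnSK // subKn // ltnW.
Qed.

Unset Implicit Arguments.

Theorem lemma4p3 (R : realType) (m n : nat) (A : 'M[quat R]_(m, n)) (t : R)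
    (i : 'I_n) (j : 'I_m) :
  let N := col_repl (conjtr A *m A) i (col j (conjtr A)) in
  let c := fun k : nat =>
    if k == n then cdet i N else sum_principal_cdet k N i in
  cdet i (col_repl ((qreal t)%:M + conjtr A *m A) i (col j (conjtr A)))
  = \sum_(k < n) c k.+1 * qreal (t ^+ (n - k.+1)).
Proof. exact: main_gen. Qed.
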